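(* Let $f \in \mathbb{N}_0[x^{\pm 1}]$ be such that $f(1)$ is a prime number. Then $f$ is irreducible in $\mathbb{N}_0[x^{\pm 1}]$.
   Context: $\mathbb{N}_0[x^{\pm 1}]$ denotes the semiring of Laurent polynomials in $x$ with nonnegative integer coefficients. Its units are exactly the monomials $x^k$, $k \in \mathbb{Z}$. An element $f$ is irreducible if it is nonzero, not a unit, and whenever $f = gh$ with $g,h \in \mathbb{N}_0[x^{\pm 1}]$, one of $g,h$ is a unit. *)

(* Defs.v *)
From mathcomp Require Import all_boot all_order all_algebra.
Set Implicit Arguments. Unset Strict Implicit. Unset Printing Implicit Defensive.
Import GRing.Theory.
Local Open Scope ring_scope.

(* Model of the semiring N_0[x^{+-1}]:
   a pair (p, k) with p : {poly nat} and k : nat represents the Laurent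
   polynomial  p(x) * x^{-k}.  Every Laurent polynomial with nonnegative
   integer coefficients has such a representation; two representations
   denote the same element iff  p * x^l = q * x^k  (setoid equality lp_eq). *)
Record laurentN := LaurentN { lp_poly : {poly nat}; lp_shift : nat }.

Definition lp_eq (f g : laurentN) : Prop :=
  lp_poly f * 'X^(lp_shift g) = lp_poly g * 'X^(lp_shift f).

Definition lp_mul (f g : laurentN) : laurentN :=
  LaurentN (lp_poly f * lp_poly g) (lp_shift f + lp_shift g)%N.

Definition lp_one : laurentN := LaurentN 1 0.
Definition lp_zero : laurentN := LaurentN 0 0.

Definition lp_eval1 (f : laurentN) : nat := (lp_poly f).[1].

Definition lp_unit (f : laurentN) : Prop :=
  exists g : laurentN, lp_eq (lp_mul f g) lp_one.

Definition lp_irreducible (f : laurentN) : Prop :=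
  ~ lp_eq f lp_zero /\ ~ lp_unit f /\
  forall g h : laurentN, lp_eq f (lp_mul g h) -> lp_unit g \/ lp_unit h.

(* Main.v *)
Require Import Defs.
From mathcomp Require Import all_boot all_order all_algebra.
Import GRing.Theory.
Local Open Scope ring_scope.

Lemma ev1 (p : {poly nat}) : p.[1] = \sum_(i < size p) p`_i.
Proof. rewrite horner_coef; apply: eq_bigr => i _; by rewrite expr1n mulr1. Qed.

Lemma coef_le_ev1 (p : {poly nat}) j : leq (p`_j)%R (p.[1])%R.
Proof.
rewrite ev1; case: (ltnP j (size p)) => hj.
  rewrite (bigD1 (Ordinal hj)) //=; exact: leq_addr.
by rewrite nth_default.
Qed.

Lemma ev1_eq1 (p : {poly nat}) : p.[1] = 1%N -> exists n, p = 'X^n.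
Proof.
move=> h.
have nz : p != 0 by apply/eqP=> p0; move: h; rewrite p0 horner0.
have hs : (0 < size p)%N by rewrite size_poly_gt0.
have : (0 < \sum_(i < size p) (p`_i)%R)%N by rewrite -ev1 h.
rewrite lt0n sum_nat_eq0 => /forallPn [i]; rewrite /= -lt0n => hi.
exists (nat_of_ord i); apply/polyP => j; rewrite coefXn.
have hle := coef_le_ev1 p j.
move: h; rewrite ev1 (bigD1 i) //= => h.
have pi1 : (p`_i)%R = 1%N.
  apply/eqP; rewrite eqn_leq hi andbT -h; exact: leq_addr.
case: eqP => [->|ne] //.
case: (ltnP j (size p)) => hj; last by rewrite nth_default.
move: h; rewrite pi1 (bigD1 (Ordinal hj)) /=; last by apply/eqP => /(congr1 val) /=; exact: ne.
by case: (p`_j)%R => // n; rewrite addSn.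
Qed.

Lemma eval_eq f g : lp_eq f g -> lp_eval1 f = lp_eval1 g.
Proof.
rewrite /lp_eq /lp_eval1 => /(congr1 (fun p => p.[1])).
by rewrite !hornerM !hornerXn !expr1n !mulr1.
Qed.

Lemma eval_mul f g : lp_eval1 (lp_mul f g) = (lp_eval1 f * lp_eval1 g)%N.
Proof. by rewrite /lp_eval1 /= hornerM. Qed.

Lemma unit_eval f : lp_unit f -> lp_eval1 f = 1%N.
Proof.
case=> g /eval_eq; rewrite eval_mul /lp_eval1 /= hornerC.
by move/eqP; rewrite muln_eq1 => /andP [/eqP].
Qed.

Lemma eval_unit f : lp_eval1 f = 1%N -> lp_unit f.
Proof.
case: f => p k; rewrite /lp_eval1 /= => /ev1_eq1 [n ->].
exists (LaurentN 'X^k n); rewrite /lp_eq /lp_mul /=.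
by rewrite expr0 mulr1 mul1r -exprD addnC.
Qed.

Theorem lemma2p1 (f : laurentN) : prime (lp_eval1 f) -> lp_irreducible f.
Proof.
move=> pr; split; [|split].
- by move/eval_eq => e; move: pr; rewrite e /lp_eval1 /= horner0.
- by move/unit_eval => e; rewrite e in pr.
- move=> g h /eval_eq; rewrite eval_mul => e; rewrite e in pr.
  have [a1|a1] := eqVneq (lp_eval1 g) 1%N; first by left; apply: eval_unit.
  right; apply: eval_unit.
  move: a1 pr; set a := lp_eval1 g; set b := lp_eval1 h => a1 pr.
  have /primeP [gt1 H] := pr.
  have := H a (dvdn_mulr _ (dvdnn a)); rewrite /= (negbTE a1) /= => /eqP e2.
  have apos : (0 < a)%N by case: (a) e2 gt1 => // ->.
  by apply/eqP; rewrite -(eqn_pmul2l apos) muln1 -e2.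
Qed.
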